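(* For $0\le r_1,r_2\le n$, $0\le s\le N(r_1,r_2)$ and all $t\in\mathbb C$, $$\lambda_s^{r_1,r_2}(t)=\binom{r_2}{s}^{-1}\sum_{j=0}^s\binom{t}{j}\binom{r_2-t}{s-j}\lambda_s^{r_1,s}(j),\qquad\text{where}\quad \lambda_s^{r_1,s}(j)=(-1)^j\frac{(r_1-s+1)_j}{[n-r_1]_j}.$$
   Context: Let $\Omega$ be a finite set with $|\Omega|=n\ge1$, $G=S(\Omega)$, $X=\mathcal P(\Omega)$, $X_r=\{x\in X:|x|=r\}$, $G$ acting on $L^2(X)$ (complex functions on $X$; $L^2(X_r)$ = functions supported on $X_r$) by $(\rho(g)\psi)(x)=\psi(g^{-1}x)$. For $0\le s\le\min(r,n-r)$, $L^2(X_r)_s$ is the unique irreducible $G$-subspace of $L^2(X_r)$ isomorphic to the irreducible representation associated with the partition $(n-s,s)$. $N(r_1,r_2)=\min(r_1,n-r_1,r_2,n-r_2)$. For $0\le s\le N(r_1,r_2)$, $\Lambda_s^{r_1,r_2}$ is a $G$-equivariant map $L^2(X)\to L^2(X)$ sending $L^2(X_{r_1})_s$ into $L^2(X_{r_2})_s$ and vanishing on its orthogonal complement, with kernel $\lambda$ defined on integers $\max(0,r_2-r_1)\le k\le\min(n-r_1,r_2)$ by $(\Lambda_s^{r_1,r_2}\psi)(x_2)=\sum_{x_1\in X_{r_1}}\lambda(|x_2\setminus x_1|)\psi(x_1)$. The kernel agrees on its domain with a unique polynomial of degree $s$ which is nonzero at $0$; $\Lambda_s^{r_1,r_2}$ is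 normalized so that this polynomial takes the value $1$ at $t=0$, and $\lambda_s^{r_1,r_2}(t)$, $t\in\mathbb C$, denotes this polynomial. Binomials $\binom{t}{j}=[t]_j/j!$ for complex $t$; $[\alpha]_k=\alpha(\alpha-1)\cdots(\alpha-k+1)$, $(\alpha)_k=\alpha(\alpha+1)\cdots(\alpha+k-1)$. *)

(* Defs.v *)
From HB Require Import structures.
From mathcomp Require Import all_boot all_order fingroup perm all_algebra.
Set Implicit Arguments. Unset Strict Implicit. Unset Printing Implicit Defensive.
Import Order.TTheory GRing.Theory Num.Theory.
Local Open Scope ring_scope.

(* Omega = 'I_n, X = {set 'I_n}, L^2(X) = complex-valued functions on X,
   with complex numbers modelled by an arbitrary numClosedFieldType C
   (e.g. algC, or complex R). *)
Notation fn C n := {ffun {set 'I_n} -> (GRing.Field.sort C)^o} (only parsing).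

Definition rho (C : numClosedFieldType) (n : nat) (g : {perm 'I_n}) (u : fn C n)
  : fn C n := [ffun x : {set 'I_n} => u ((g^-1)%g @: x)].

Definition subspace (C : numClosedFieldType) (n : nat) (W : fn C n -> Prop) :=
  W 0 /\ (forall (a : C) u v, W u -> W v -> W (a *: u + v)).

Definition Ginvariant (C : numClosedFieldType) (n : nat) (W : fn C n -> Prop) :=
  forall (g : {perm 'I_n}) u, W u -> W (rho g u).

Definition supported_on (C : numClosedFieldType) (n r : nat) (u : fn C n) :=
  forall x : {set 'I_n}, #|x| != r -> u x = 0.

Definition irreducibleG (C : numClosedFieldType) (n : nat) (W : fn C n -> Prop) :=
  [/\ subspace W, Ginvariant W, (exists u, W u /\ u != 0) &
      forall U : fn C n -> Prop, subspace U -> Ginvariant U ->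
        (forall u, U u -> W u) ->
        (forall u, U u -> u = 0) \/ (forall u, W u -> U u)].

Definition Giso (C : numClosedFieldType) (n : nat) (V W : fn C n -> Prop) :=
  exists f : fn C n -> fn C n,
    [/\ forall (a : C) u v, f (a *: u + v) = a *: f u + f v,
        forall u, V u -> W (f u),
        forall w, W w -> exists u, V u /\ f u = w,
        forall u v, V u -> V v -> f u = f v -> u = v &
        forall g u, V u -> f (rho g u) = rho g (f u)].

Definition delta (C : numClosedFieldType) (n : nat) (x : {set 'I_n}) : fn C n :=
  [ffun y => (y == x)%:R].

(* Polytabloid of shape (n-s,s): the injection e encodes a tableau whose
   i-th column (i < s) is (e (i,true), e (i,false)); tabloids of shape
   (n-s,s) are identified with their second row, an s-subset of Omega. *)
Definition polytab (C : numClosedFieldType) (n s : nat)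
  (e : {ffun 'I_s * bool -> 'I_n}) : fn C n :=
  \sum_(eps : {ffun 'I_s -> bool})
     ((-1) ^+ #|[set i | eps i]|) *: @delta C n [set e (i, eps i) | i : 'I_s].

Definition Specht (C : numClosedFieldType) (n s : nat) (u : fn C n) : Prop :=
  exists c : {ffun {ffun 'I_s * bool -> 'I_n} -> C},
    u = \sum_(e : {ffun 'I_s * bool -> 'I_n} | injectiveb e) c e *: @polytab C n s e.

(* W is "L^2(X_r)_s": an irreducible G-subspace of L^2(X_r) isomorphic to the
   irreducible representation associated with the partition (n-s,s). *)
Definition IsComp (C : numClosedFieldType) (n r s : nat) (W : fn C n -> Prop) :=
  [/\ irreducibleG W, forall u, W u -> supported_on r u & Giso (@Specht C n s) W].

Definition inner (C : numClosedFieldType) (n : nat) (u v : fn C n) : C :=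
  \sum_(x : {set 'I_n}) (u x : C) * ((v x : C)^*).

Definition IsLambda (C : numClosedFieldType) (n r1 r2 s : nat) (p : {poly C}) :=
  exists (W1 W2 : fn C n -> Prop) (L : fn C n -> fn C n),
    IsComp r1 s W1 /\ IsComp r2 s W2 /\
    (forall g u, L (rho g u) = rho g (L u)) /\
    (forall u, W1 u -> W2 (L u)) /\
    (forall u, (forall w, W1 w -> inner w u = 0) -> L u = 0) /\
    (forall u (x2 : {set 'I_n}), #|x2| = r2 ->
       L u x2 = \sum_(x1 : {set 'I_n} | #|x1| == r1)
                   p.[(#|x2 :\: x1|)%:R] * u x1) /\
    size p = s.+1 /\ p.[0] = 1.

Definition Nmin (n r1 r2 : nat) : nat := minn (minn r1 (n - r1)) (minn r2 (n - r2)).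

Definition falling (C : numClosedFieldType) (t : C) (j : nat) : C :=
  \prod_(i < j) (t - i%:R).
Definition rising (C : numClosedFieldType) (a : C) (j : nat) : C :=
  \prod_(i < j) (a + i%:R).
Definition cbinom (C : numClosedFieldType) (t : C) (j : nat) : C :=
  falling t j / (j`!)%:R.

Definition lam0 (C : numClosedFieldType) (n r1 s j : nat) : C :=
  (-1) ^+ j * rising (r1%:R - s%:R + 1 : C) j / falling ((n - r1)%N%:R : C) j.

(* Main.v *)
Require Import Defs.
From HB Require Import structures.
From mathcomp Require Import all_boot all_order fingroup perm all_algebra.
Import Order.TTheory GRing.Theory Num.Theory.
Local Open Scope ring_scope.
Set Implicit Arguments. Unset Strict Implicit. From mathcomp Require Import zify ring.

Inductive spanB (C : numClosedFieldType) (n k : nat) : ({set 'I_n} -> C) -> Prop :=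
| spB0 : spanB k (fun _ => 0)
| spB1 (c : C) (B : {set 'I_n}) : (#|B| <= k)%N -> spanB k (fun x => c * (B \subset x)%:R)
| spBD f g : spanB k f -> spanB k g -> spanB k (fun x => f x + g x)
| spBE f g : spanB k f -> (forall x, f x = g x) -> spanB k g.

Arguments spB0 {C n k}.

Lemma spanB_scale (C : numClosedFieldType) n k (c : C) f :
  spanB k f -> spanB (n:=n) k (fun x => c * f x).
Proof.
elim=> [|d B hB|f1 f2 _ h1 _ h2|f1 f2 _ h1 e].
- by apply: spBE (spB0) _ => x; rewrite mulr0.
- by apply: spBE (spB1 (c*d) hB) _ => x; rewrite mulrA.
- by apply: spBE (spBD h1 h2) _ => x; rewrite mulrDr.
- by apply: spBE h1 _ => x; rewrite e.
Qed.

Lemma spanB_mono (C : numClosedFieldType) n k k' (f : {set 'I_n} -> C) :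
  (k <= k')%N -> spanB k f -> spanB k' f.
Proof.
move=> hk; elim=> [|d B hB|f1 f2 _ h1 _ h2|f1 f2 _ h1 e].
- exact: spB0.
- by apply: spB1; apply: leq_trans hk.
- exact: spBD.
- exact: spBE h1 e.
Qed.

Lemma spanB_const (C : numClosedFieldType) n k (c : C) : spanB (n:=n) k (fun _ => c).
Proof.
have h0 : (#|(set0 : {set 'I_n})| <= k)%N by rewrite cards0.
by apply: spBE (spB1 c h0) _ => x; rewrite sub0set mulr1.
Qed.

Lemma spanB_mul (C : numClosedFieldType) n a b (f g : {set 'I_n} -> C) :
  spanB a f -> spanB b g -> spanB (a + b) (fun x => f x * g x).
Proof.
move=> hf; elim: hf g => [|c B hB|f1 f2 _ h1 _ h2|f1 f2 _ h1 e] g hg.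
- by apply: spBE spB0 _ => x; rewrite mul0r.
- elim: hg => [|d B' hB'|g1 g2 _ k1 _ k2|g1 g2 _ k1 e].
  + by apply: spBE spB0 _ => x; rewrite mulr0.
  + have hU : (#|B :|: B'| <= a + b)%N.
      by apply: leq_trans (leq_card_setU _ _) _; apply: leq_add.
    apply: spBE (spB1 (c*d) hU) _ => x.
    rewrite subUset; case: (B \subset x); case: (B' \subset x);
      by rewrite ?mulr1 ?mulr0 ?mul0r.
  + by apply: spBE (spBD k1 k2) _ => x; rewrite mulrDr.
  + by apply: spBE k1 _ => x; rewrite e.
- by apply: spBE (spBD (h1 g hg) (h2 g hg)) _ => x; rewrite mulrDl.
- by apply: spBE (h1 g hg) _ => x; rewrite e.
Qed.

Lemma spanB_sum (C : numClosedFieldType) n k (I : Type) (r : seq I) (F : I -> {set 'I_n} -> C) :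
  (forall i, spanB k (F i)) -> spanB k (fun x => \sum_(i <- r) F i x).
Proof.
move=> hF; elim: r => [|i r IH].
  by apply: spBE spB0 _ => x; rewrite big_nil.
by apply: spBE (spBD (hF i) IH) _ => x; rewrite big_cons.
Qed.

Lemma spanB_sumf (C : numClosedFieldType) n k (I : finType) (F : I -> {set 'I_n} -> C) :
  (forall i, spanB k (F i)) -> spanB k (fun x => \sum_(i : I) F i x).
Proof. exact: spanB_sum. Qed.

Lemma spanB_exp (C : numClosedFieldType) n (f : {set 'I_n} -> C) m :
  spanB 1 f -> spanB m (fun x => f x ^+ m).
Proof.
move=> hf; elim: m => [|m IH].
  by apply: spBE (@spanB_const C n 0 1) _ => x; rewrite expr0.
have := spanB_mul hf IH; rewrite add1n => h.
by apply: spBE h _ => x; rewrite exprS.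
Qed.

Lemma spanB_poly (C : numClosedFieldType) n (f : {set 'I_n} -> C) (g : {poly C}) m :
  spanB 1 f -> (size g <= m.+1)%N -> spanB m (fun x => g.[f x]).
Proof.
move=> hf hs.
apply: (spBE (f := fun x => \sum_(i < size g) g`_i * f x ^+ i)).
  refine (@spanB_sumf C n m _ (fun (i : 'I_(size g)) x => g`_i * f x ^+ i) _).
  move=> i; apply: spanB_scale; apply: spanB_mono (spanB_exp i hf).
  by rewrite -ltnS; apply: leq_trans (ltn_ord i) hs.
by move=> x; rewrite horner_coef.
Qed.

Lemma orth_span (C : numClosedFieldType) n k (w : {set 'I_n} -> C) :
  (forall B : {set 'I_n}, (#|B| <= k)%N -> \sum_x w x * (B \subset x)%:R = 0) ->
  forall f, spanB k f -> \sum_x w x * f x = 0.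
Proof.
move=> hw f; elim=> [|c B hB|f1 f2 _ h1 _ h2|f1 f2 _ h1 e].
- by rewrite big1 // => x _; rewrite mulr0.
- under eq_bigr => x _ do rewrite mulrCA.
  by rewrite -mulr_sumr hw // mulr0.
- under eq_bigr => x _ do rewrite mulrDr.
  by rewrite big_split /= h1 h2 addr0.
- by rewrite -[RHS]h1; apply: eq_bigr => x _; rewrite e.
Qed.
Lemma pigeon (n s : nat) (e : {ffun 'I_s * bool -> 'I_n}) (B : {set 'I_n}) :
  injective e -> (#|B| < s)%N ->
  exists i : 'I_s, e (i, true) \notin B /\ e (i, false) \notin B.
Proof.
move=> ie hB.
case: (boolP [exists i, (e (i, true) \notin B) && (e (i, false) \notin B)]).
  by case/existsP=> i /andP[h1 h2]; exists i.
move/existsPn=> h; exfalso.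
pose T := [set p | e p \in B].
have h1 : (#|T| <= #|B|)%N.
  rewrite -(card_imset _ ie); apply: subset_leq_card.
  by apply/subsetP=> y /imsetP[p]; rewrite inE => hp ->.
have h2 : [set p.1 | p in T] = setT.
  apply/setP=> i; rewrite inE; have := h i; rewrite negb_and !negbK.
  case/orP=> hi; apply/imsetP.
    by exists (i, true); rewrite ?inE.
  by exists (i, false); rewrite ?inE.
have := leq_imset_card (fun p : 'I_s * bool => p.1) T.
rewrite h2 cardsT card_ord => h3.
have := leq_trans h3 h1; rewrite leqNgt hB //.
Qed.

Lemma mem_tperm_imset (n : nat) (a b y : 'I_n) (x : {set 'I_n}) :
  (y \in tperm a b @: x) = (tperm a b y \in x).
Proof. by rewrite -{1}(tpermK a b y) mem_imset //; apply: perm_inj. Qed.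

Lemma antisym_orth (C : numClosedFieldType) (n s : nat) (e : {ffun 'I_s * bool -> 'I_n})
  (F : {set 'I_n} -> C) (B : {set 'I_n}) :
  injective e ->
  (forall (i : 'I_s) (x : {set 'I_n}), F (tperm (e (i, true)) (e (i, false)) @: x) = - F x) ->
  (#|B| < s)%N -> \sum_x F x * (B \subset x)%:R = 0.
Proof.
move=> ie hF hB; have [i [hi1 hi2]] := pigeon ie hB.
set t := tperm (e (i, true)) (e (i, false)).
have hsub : forall x : {set 'I_n}, (B \subset t @: x) = (B \subset x).
  move=> x; apply/idP/idP=> /subsetP h; apply/subsetP=> y hy.
    have hy1 : e (i, true) != y by apply/eqP=> eqy; move: hi1; rewrite eqy hy.
    have hy2 : e (i, false) != y by apply/eqP=> eqy; move: hi2; rewrite eqy hy.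
    by have := h y hy; rewrite mem_tperm_imset tpermD.
  have hy1 : e (i, true) != y by apply/eqP=> eqy; move: hi1; rewrite eqy hy.
  have hy2 : e (i, false) != y by apply/eqP=> eqy; move: hi2; rewrite eqy hy.
  by rewrite mem_tperm_imset tpermD ?h.
set S := \sum_x _.
have : S = - S.
  rewrite {1}/S (reindex_inj (imset_inj (@perm_inj _ t))) /=.
  rewrite -sumrN; apply: eq_bigr => x _.
  by rewrite hF hsub mulNr.
move/eqP; rewrite -subr_eq0 opprK -mulr2n mulrn_eq0 /= => /eqP //.
Qed.
Lemma rho_sum (C : numClosedFieldType) n (g : {perm 'I_n}) (I : finType) (P : pred I)
  (F : I -> fn C n) : rho g (\sum_(i | P i) F i) = \sum_(i | P i) rho g (F i).
Proof. by apply/ffunP=> x; rewrite ffunE !sum_ffunE; apply: eq_bigr => i _; rewrite ffunE. Qed.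

Lemma rho_lin (C : numClosedFieldType) n (g : {perm 'I_n}) (a : C) (u v : fn C n) :
  rho g (a *: u + v) = a *: rho g u + rho g v.
Proof. by apply/ffunP=> x; rewrite !ffunE. Qed.

Lemma rho_scale (C : numClosedFieldType) n (g : {perm 'I_n}) (a : C) (u : fn C n) :
  rho g (a *: u) = a *: rho g u.
Proof. by apply/ffunP=> x; rewrite !ffunE. Qed.

Lemma imsetKV n (g : {perm 'I_n}) (y : {set 'I_n}) : g @: ((g^-1)%g @: y) = y.
Proof.
by rewrite -imset_comp (eq_imset _ (permKV g)) imset_id.
Qed.

Lemma imsetK' n (g : {perm 'I_n}) (y : {set 'I_n}) : (g^-1)%g @: (g @: y) = y.
Proof.
by rewrite -imset_comp (eq_imset _ (permK g)) imset_id.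
Qed.

Lemma rho_delta (C : numClosedFieldType) n (g : {perm 'I_n}) (x : {set 'I_n}) :
  rho g (@delta C n x) = delta C (g @: x).
Proof.
apply/ffunP=> y; rewrite !ffunE.
have -> : ((g^-1)%g @: y == x) = (y == g @: x); last by [].
apply/eqP/eqP=> [<-|->]; first by rewrite imsetKV.
by rewrite imsetK'.
Qed.

Definition Sset n s (e : {ffun 'I_s * bool -> 'I_n}) (eps : {ffun 'I_s -> bool}) :
  {set 'I_n} := [set e (k, eps k) | k : 'I_s].

Definition flip s (i : 'I_s) (eps : {ffun 'I_s -> bool}) : {ffun 'I_s -> bool} :=
  [ffun k => if k == i then ~~ eps k else eps k].

Lemma flipK s (i : 'I_s) : involutive (flip i).
Proof. by move=> eps; apply/ffunP=> k; rewrite !ffunE; case: (k == i); rewrite ?negbK. Qed.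

Lemma sign_flip (C : numClosedFieldType) s (i : 'I_s) eps :
  (-1) ^+ #|[set k | flip i eps k]| = - ((-1) ^+ #|[set k | eps k]|) :> C.
Proof.
case h: (eps i).
- have -> : [set k | flip i eps k] = [set k | eps k] :\ i.
    by apply/setP=> k; rewrite !inE !ffunE; case: eqP => [->|]; rewrite ?h.
  by rewrite [#|[set k | eps k]|](cardsD1 i) inE h add1n exprS mulN1r opprK.
- have -> : [set k | flip i eps k] = i |: [set k | eps k].
    by apply/setP=> k; rewrite !inE !ffunE; case: eqP => [->|]; rewrite ?h.
  by rewrite cardsU1 inE h add1n exprS mulN1r.
Qed.

Lemma tperm_Sset n s (e : {ffun 'I_s * bool -> 'I_n}) (i : 'I_s) eps :
  injective e ->
  tperm (e (i, true)) (e (i, false)) @: Sset e eps = Sset e (flip i eps).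
Proof.
move=> ie; rewrite /Sset -imset_comp; apply: eq_imset => k /=; rewrite ffunE.
case: eqP => [->|/eqP hk].
  by case: (eps i); rewrite ?tpermL ?tpermR.
rewrite tpermD //; apply/eqP=> /ie [] /eqP; by rewrite eq_sym (negbTE hk).
Qed.

Lemma Sset_inj n s (e : {ffun 'I_s * bool -> 'I_n}) : injective e -> injective (Sset e).
Proof.
move=> ie eps eps' h; apply/ffunP=> k.
have : e (k, eps k) \in Sset e eps' by rewrite -h; apply: imset_f.
by case/imsetP=> k' _ /ie [] -> ->.
Qed.

Lemma polytab_anti (C : numClosedFieldType) n s (e : {ffun 'I_s * bool -> 'I_n}) (i : 'I_s) :
  injective e ->
  rho (tperm (e (i, true)) (e (i, false))) (@polytab C n s e) = - polytab C e.
Proof.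
move=> ie; rewrite /polytab rho_sum.
under eq_bigr => eps _ do rewrite rho_scale rho_delta.
rewrite -sumrN (reindex_inj (inv_inj (@flipK s i))) /=.
apply: eq_bigr => eps _.
rewrite -[[set e (k, flip i eps k) | k : 'I_s]]/(Sset e (flip i eps)).
rewrite tperm_Sset // flipK.
by rewrite sign_flip scaleNr.
Qed.
Lemma scalCE (C : numClosedFieldType) (a b : C) : a *: (b : C^o) = a * b.
Proof. by []. Qed.

Lemma polytab_at (C : numClosedFieldType) n s (e : {ffun 'I_s * bool -> 'I_n}) :
  injective e -> @polytab C n s e (Sset e [ffun => false]) = 1.
Proof.
move=> ie; rewrite /polytab sum_ffunE (bigD1 [ffun => false]) //= big1 ?addr0.
  rewrite !ffunE eqxx scalCE mulr1.
  have -> : [set k | [ffun=> false] k] = set0 :> {set 'I_s}.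
    by apply/setP=> k; rewrite !inE ffunE.
  by rewrite cards0 expr0.
move=> eps heps; rewrite !ffunE scalCE.
have -> : (Sset e [ffun=> false] == [set e (k, eps k) | k : 'I_s]) = false.
  apply/negbTE; apply/eqP=> h; move/eqP: heps; apply.
  by apply: (Sset_inj ie); rewrite h.
by rewrite mulr0.
Qed.

Lemma polytab_ne0 (C : numClosedFieldType) n s (e : {ffun 'I_s * bool -> 'I_n}) :
  injective e -> @polytab C n s e != 0.
Proof.
move=> ie; apply/eqP=> h; have := polytab_at C ie; rewrite h ffunE => /eqP.
by rewrite eq_sym oner_eq0.
Qed.

Lemma Specht_polytab (C : numClosedFieldType) n s (e : {ffun 'I_s * bool -> 'I_n}) :
  injective e -> Specht s (polytab C e).
Proof.
move=> ie; exists [ffun e' => (e' == e)%:R].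
rewrite (bigD1 e) /=; last by apply/injectiveP.
rewrite ffunE eqxx scale1r big1 ?addr0 // => e' /andP[_ he'].
by rewrite ffunE (negbTE he') scale0r.
Qed.

Lemma Specht0 (C : numClosedFieldType) n s : @Specht C n s 0.
Proof.
exists 0; rewrite big1 // => e' _; by rewrite ffunE scale0r.
Qed.

Lemma mke_ex n s : (s + s <= n)%N -> exists e : {ffun 'I_s * bool -> 'I_n}, injective e.
Proof.
move=> h.
have hp : forall p : 'I_s * bool, (p.1 + (if p.2 then s else 0) < n)%N.
  case=> i b /=; have := ltn_ord i; case: b => hi.
    by apply: leq_trans h; rewrite ltn_add2r.
  by rewrite addn0; apply: leq_trans hi _; apply: leq_trans h; apply: leq_addr.
exists [ffun p => Ordinal (hp p)].
move=> [i b] [j c]; rewrite !ffunE => /(congr1 val) /= hij.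
have hi := ltn_ord i; have hj := ltn_ord j.
case: b c hij => [] [] hij.
- by congr pair; apply/val_inj/eqP; rewrite -(eqn_add2r s) hij.
- by exfalso; move: hij; rewrite addn0 => hij; move: hj; rewrite -hij ltnNge leq_addl.
- by exfalso; move: hij; rewrite addn0 => hij; move: hi; rewrite hij ltnNge leq_addl.
- by congr pair; apply/val_inj/eqP; rewrite -(eqn_add2r 0) hij.
Qed.

Lemma W1_orth (C : numClosedFieldType) n r s (W : fn C n -> Prop) :
  (s + s <= n)%N -> IsComp r s W ->
  forall w, W w -> forall B : {set 'I_n}, (#|B| < s)%N -> \sum_x w x * (B \subset x)%:R = 0.
Proof.
move=> hs [[[hW0 hWl] hinv _ hirr] hsupp [f [flin fVW fsurj finj feq]]].
pose U := fun w : fn C n => W w /\ forall B : {set 'I_n}, (#|B| < s)%N ->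
   \sum_x w x * (B \subset x)%:R = 0.
have sU : subspace U.
  split.
    split=> // B _; by rewrite big1 // => x _; rewrite ffunE mul0r.
  move=> a u v [hu su] [hv sv]; split; first exact: hWl.
  move=> B hB.
  under eq_bigr => x _ do rewrite !ffunE mulrDl -mulrA.
  by rewrite big_split /= -mulr_sumr su // sv // mulr0 addr0.
have iU : Ginvariant U.
  move=> g u [hu su]; split; first exact: hinv.
  move=> B hB.
  rewrite (reindex_inj (imset_inj (@perm_inj _ g))) /=.
  have -> : \sum_(x : {set 'I_n}) rho g u (g @: x) * (B \subset g @: x)%:R =
            \sum_(x : {set 'I_n}) u x * ((g^-1)%g @: B \subset x)%:R.
    apply: eq_bigr => x _; rewrite ffunE imsetK'.
    have -> : (B \subset g @: x) = ((g^-1)%g @: B \subset x) => //.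
    apply/idP/idP => h.
      by rewrite -(imsetK' g x); apply: imsetS.
    by rewrite -(imsetKV g B); apply: imsetS.
  by apply: su; rewrite card_imset //; apply: perm_inj.
have f0 : f 0 = 0.
  have := flin 1 0 0; rewrite !scale1r addr0 => /(congr1 (fun z => z - f 0)).
  by rewrite subrr addrK => <-.
case: (hirr U sU iU (fun u hu => hu.1)) => [h0|hall]; last first.
  by move=> w hw B hB; apply: (hall w hw).2.
exfalso.
have [e ie] := mke_ex hs.
have hP := Specht_polytab C ie.
pose F := f (polytab C e).
have UF : U F.
  split; first exact: fVW.
  move=> B hB; apply: (@antisym_orth C n s e (fun x => F x)) => // i x.
  set t := tperm (e (i, true)) (e (i, false)).
  have -> : F (t @: x) = rho t F x by rewrite ffunE tpermV.
  rewrite /F -feq // polytab_anti //.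
  have := flin (-1) (polytab C e) 0; rewrite f0 !addr0 !scaleN1r => ->.
  by rewrite ffunE.
have := h0 F UF; rewrite /F -f0 => /finj.
move=> /(_ hP (Specht0 C n s)) /eqP; by rewrite (negbTE (polytab_ne0 C ie)).
Qed.
Definition tt (C : numClosedFieldType) n (x2 x : {set 'I_n}) : C := (#|x2 :\: x|)%:R.

Lemma tt_span (C : numClosedFieldType) n (x2 : {set 'I_n}) : spanB 1 (@tt C n x2).
Proof.
apply: (spBE (f := fun x => (#|x2|%:R : C) +
   \sum_(e in x2) (-1) * ([set e] \subset x)%:R)).
  apply: spBD; first exact: spanB_const.
  rewrite /=; apply: (spBE (f := fun x => \sum_(e : 'I_n) if e \in x2 then (-1) * ([set e] \subset x)%:R else 0)).
    apply: spanB_sumf => e; case: (e \in x2); last exact: spB0.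
    by apply: spB1; rewrite cards1.
  by move=> x; rewrite [in RHS]big_mkcond.
move=> x; rewrite /tt.
have h := cardsID x x2.
have -> : #|x2 :\: x| = (#|x2| - #|x2 :&: x|)%N by rewrite -h addKn.
rewrite natrB; last by rewrite -h leq_addr.
have -> : (#|x2 :&: x|%:R : C) = \sum_(e in x2) (e \in x)%:R.
  rewrite -sum1_card natr_sum big_mkcond [in RHS]big_mkcond; apply: eq_bigr => e _ /=.
  by rewrite inE; case: (e \in x2); case: (e \in x).
rewrite -sumrN; congr (_ + _); apply: eq_bigr => e _.
by rewrite sub1set mulN1r.
Qed.

Lemma conj_horner_nat (C : numClosedFieldType) (g : {poly C}) (m : nat) :
  (g.[m%:R])^* = (map_poly Num.conj g).[m%:R].
Proof. by rewrite -{2}(conjC_nat C m) horner_map. Qed.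

Lemma rowp (C : numClosedFieldType) n r1 r2 s (p : {poly C}) :
  (s + s <= n)%N -> (0 < s)%N -> IsLambda n r1 r2 s p ->
  forall x2 : {set 'I_n}, #|x2| = r2 ->
  forall g : {poly C}, (size g <= s)%N ->
  \sum_(x1 : {set 'I_n} | #|x1| == r1) p.[tt C x2 x1] * g.[tt C x2 x1] = 0.
Proof.
move=> hs s0 [W1 [W2 [L [c1 [c2 [_ [_ [hk [hf _]]]]]]]]] x2 hx2 g hg.
pose u : fn C n := [ffun x => g.[tt C x2 x]].
have hu : L u = 0.
  apply: hk => w hw; rewrite /inner.
  have h1 : forall B : {set 'I_n}, (#|B| <= s.-1)%N -> \sum_x w x * (B \subset x)%:R = 0.
    move=> B hB; apply: (W1_orth hs c1 hw); by rewrite (leq_ltn_trans hB) // prednK.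
  have h2 : spanB s.-1 (fun x : {set 'I_n} => (map_poly Num.conj g).[tt C x2 x]).
    apply: spanB_poly; first exact: tt_span.
    by rewrite size_map_poly prednK.
  have := @orth_span C n s.-1 (fun x => w x) h1 _ h2 => /= h.
  rewrite -[RHS]h; apply: eq_bigr => x _; by rewrite ffunE conj_horner_nat.
have := hf u x2 hx2; rewrite hu ffunE => h; rewrite [RHS]h.
by apply: eq_bigr => x _; rewrite ffunE.
Qed.
Lemma split_ao (T : finType) (a o A U : {set T}) : a \subset A -> o \subset U :\: A ->
  a = (a :|: o) :&: A /\ o = (a :|: o) :\: A.
Proof.
move=> /subsetP ha /subsetP ho; split; apply/setP=> z; rewrite !inE;
  move: (ha z) (ho z); rewrite !inE;
  case: (z \in a); case: (z \in o); case: (z \in A); case: (z \in U) => //= h1 h2;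
  solve [by have := h1 isT | by have := h2 isT].
Qed.

Lemma count_inter (T : finType) (U A : {set T}) (m i : nat) :
  A \subset U -> (i <= m)%N ->
  #|[set x : {set T} | (x \subset U) && (#|x| == m) && (#|x :&: A| == i)]| =
  ('C(#|A|, i) * 'C(#|U :\: A|, m - i))%N.
Proof.
move=> hAU him.
pose D := setX [set a : {set T} | a \subset A & #|a| == i]
               [set o : {set T} | o \subset U :\: A & #|o| == (m - i)%N].
have hD : #|D| = ('C(#|A|, i) * 'C(#|U :\: A|, m - i))%N by rewrite cardsX !cards_draws.
rewrite -hD -(@card_in_imset _ _ (fun p : {set T} * {set T} => p.1 :|: p.2) D).
  apply: eq_card => x; rewrite !inE.
  apply/idP/imsetP.
    case/andP=> /andP[hxU /eqP hxm] /eqP hxi.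
    exists (x :&: A, x :&: (U :\: A)).
      rewrite !inE subsetIr hxi eqxx subsetIr /=.
      have -> : x :&: (U :\: A) = x :\: A.
        apply/setP=> z; rewrite !inE.
        by case: (z \in A); case hz: (z \in x) => //=; rewrite (subsetP hxU).
      by have := cardsID A x; rewrite hxi -hxm => <-; rewrite addKn.
    apply/setP=> z; rewrite !inE /=.
    by case: (z \in A); case hz: (z \in x) => //=; rewrite ?andbF ?(subsetP hxU).
  case=> [[a o]]; rewrite !inE /= => /andP[/andP[ha /eqP hai] /andP[ho /eqP hoi]] ->.
  have hdis : [disjoint a & o].
    rewrite -setI_eq0; apply/eqP/setP=> z; rewrite !inE.
    apply/negbTE; apply/negP=> /andP[za zo].
    by have := subsetP ho z zo; rewrite !inE (subsetP ha z za).
  have hUo : a :|: o \subset U.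
    rewrite subUset (subset_trans ha hAU) (subset_trans ho) //; exact: subsetDl.
  have hI : (a :|: o) :&: A = a.
    apply/setP=> z; rewrite !inE; case za: (z \in a); first by rewrite (subsetP ha).
    case zo: (z \in o) => //=; by have := subsetP ho z zo; rewrite !inE => /andP[/negbTE ->].
  rewrite hUo hI hai eqxx andbT /=.
  move: hdis; rewrite -setI_eq0 => /eqP h0.
  by rewrite cardsU h0 cards0 subn0 hai hoi subnKC.
move=> [a o] [a' o']; rewrite !inE /= => /andP[/andP[ha _] /andP[ho _]] /andP[/andP[ha' _] /andP[ho' _]] h.
have [e1 e2] := split_ao ha ho; have [e1' e2'] := split_ao ha' ho'.
by congr pair; [rewrite e1 h -e1' | rewrite e2 h -e2'].
Qed.

Lemma sum_by_inter (C : numClosedFieldType) (T : finType) (U A : {set T}) (m : nat) (F : nat -> C) :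
  A \subset U ->
  \sum_(x : {set T} | (x \subset U) && (#|x| == m)) F #|x :&: A| =
  \sum_(i < #|A|.+1) ('C(#|A|, i) * 'C(#|U :\: A|, m - i) * (i <= m))%N%:R * F i.
Proof.
move=> hAU.
rewrite big_mkcond /=.
have h1 : forall x : {set T}, (if (x \subset U) && (#|x| == m) then F #|x :&: A| else 0) =
   \sum_(i < #|A|.+1) (if (x \subset U) && (#|x| == m) && (#|x :&: A| == i) then F i else 0).
  move=> x.
  have hx : (#|x :&: A| < #|A|.+1)%N by rewrite ltnS subset_leq_card // subsetIr.
  rewrite (bigD1 (Ordinal hx)) //= eqxx andbT big1 ?addr0 //.
  move=> i /eqP hi; case: ifP => // /andP[_ /eqP hxi]; exfalso; apply: hi.
  by apply: val_inj; rewrite /= hxi.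
under eq_bigr => x _ do rewrite h1.
rewrite exchange_big /=; apply: eq_bigr => i _.
rewrite -big_mkcond sumr_const /=.
have -> : #|[pred x : {set T} | (x \subset U) && (#|x| == m) && (#|x :&: A| == i)]| =
   #|[set x : {set T} | (x \subset U) && (#|x| == m) && (#|x :&: A| == i)]|.
  by apply: eq_card => x; rewrite inE.
case: (leqP i m) => him.
  by rewrite count_inter // muln1 mulr_natl.
rewrite muln0 mul0r.
have -> : [set x : {set T} | (x \subset U) && (#|x| == m) && (#|x :&: A| == i)] = set0.
  apply/setP=> x; rewrite !inE; apply/negbTE; apply/negP=> /andP[/andP[_ /eqP hxm] /eqP hxi].
  have : (#|x :&: A| <= #|x|)%N by rewrite subset_leq_card // subsetIl.
  by rewrite hxi hxm leqNgt him.
by rewrite cards0 mulr0n.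
Qed.
Lemma ffact_swap (Q N' M b j : nat) : (b <= N')%N -> (j <= N')%N -> Q = (N' + M - b)%N ->
  (Q ^_ (N' - j) * (M + j) ^_ j = Q ^_ (N' - b) * (M + j) ^_ b)%N.
Proof.
move=> hb hj hQ.
case: (ltnP (M + j) b) => h.
  rewrite (ffact_small h) muln0 ffact_small ?mul0n //; lia.
apply/eqP; rewrite -(eqn_pmul2r (fact_gt0 (M + j - b))) -(eqn_pmul2r (fact_gt0 M)).
have e1 : (Q ^_ (N' - j) * (M + j - b)`! = Q`!)%N.
  have h1 : (N' - j <= Q)%N by lia.
  have := ffact_fact h1; have -> : (Q - (N' - j) = M + j - b)%N by lia. by [].
have e2 : ((M + j) ^_ j * M`! = (M + j)`!)%N.
  have h1 : (j <= M + j)%N by lia.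
  have := ffact_fact h1; have -> : (M + j - j = M)%N by lia. by [].
have e3 : (Q ^_ (N' - b) * M`! = Q`!)%N.
  have h1 : (N' - b <= Q)%N by lia.
  have := ffact_fact h1; have -> : (Q - (N' - b) = M)%N by lia. by [].
have e4 : ((M + j) ^_ b * (M + j - b)`! = (M + j)`!)%N by rewrite ffact_fact.
apply/eqP.
transitivity (Q`! * (M + j)`!)%N.
  by rewrite -e1 -e2; ring.
by rewrite -e3 -e4; ring.
Qed.

Lemma fd_gen (C : numClosedFieldType) (K : nat) (g : nat -> C) :
  \sum_(j < K.+2) (-1) ^+ j * 'C(K.+1, j)%:R * g j =
  \sum_(j < K.+1) (-1) ^+ j * 'C(K, j)%:R * (g j - g j.+1).
Proof.
rewrite big_ord_recl /=.
under eq_bigr => j _ do rewrite /bump /= binS natrD mulrDr mulrDl.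
rewrite big_split /=.
have -> : \sum_(i < K.+1) (-1) ^+ (1 + i)%N * 'C(K, i.+1)%:R * g (1 + i)%N =
          \sum_(i < K.+1) (-1) ^+ i.+1 * 'C(K, i.+1)%:R * g i.+1 by [].
rewrite addrA.
have -> : (-1) ^+ 0 * 'C(K.+1, 0)%:R * g 0%N +
     \sum_(i < K.+1) (-1) ^+ i.+1 * 'C(K, i.+1)%:R * g i.+1 =
     \sum_(i < K.+2) (-1) ^+ i * 'C(K, i)%:R * g i.
  by rewrite [in RHS]big_ord_recl /= !bin0.
rewrite big_ord_recr /= bin_small // mulr0 mul0r addr0.
rewrite -big_split /=; apply: eq_bigr => i _.
by rewrite add1n exprS mulN1r !mulNr mulrBr.
Qed.

Lemma fd (C : numClosedFieldType) (K M b : nat) : (b < K)%N ->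
  \sum_(j < K.+1) (-1) ^+ j * 'C(K, j)%:R * 'C(M + j, b)%:R = 0 :> C.
Proof.
elim: K b => [|K IH] b hb //.
rewrite (@fd_gen C K (fun j => ('C(M + j, b))%:R)).
case: b hb => [|b] hb.
  by rewrite big1 // => i _; rewrite !bin0 subrr mulr0.
rewrite -[RHS]oppr0 -[in RHS](IH b) // -sumrN; apply: eq_bigr => i _.
by rewrite addnS binS natrD opprD addrA subrr sub0r mulrN.
Qed.

Lemma rising_nat (C : numClosedFieldType) (a j : nat) :
  rising (a%:R + 1 : C) j = ((a + j) ^_ j)%:R.
Proof.
elim: j => [|j IH]; first by rewrite /rising big_ord0 ffactn0.
rewrite /rising big_ord_recr /= -/(rising _ _) IH addnS ffactSS natrM mulrC.
by congr (_ * _); rewrite -addn1 natrD addrAC natrD.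
Qed.

Lemma falling_nat (C : numClosedFieldType) (N j : nat) : (j <= N)%N ->
  falling (N%:R : C) j = (N ^_ j)%:R.
Proof.
elim: j => [|j IH] hj; first by rewrite /falling big_ord0 ffactn0.
rewrite /falling big_ord_recr /= -/(falling _ _) IH ?(ltnW hj) //.
by rewrite ffactnSr natrM natrB // ltnW.
Qed.

Lemma lam_ident (C : numClosedFieldType) n r1 s K Q b :
  (s <= r1)%N -> (s <= n - r1)%N -> (K <= s)%N -> (b < K)%N -> (Q + s + b = n)%N ->
  \sum_(i < K.+1) ('C(K, i) * 'C(Q, n - r1 - i) * (i <= n - r1))%N%:R * lam0 C n r1 s i = 0.
Proof.
move=> hs1 hs2 hK hb hQn.
set N' := (n - r1)%N; set M := (r1 - s)%N.
have hQ : Q = (N' + M - b)%N by rewrite /N' /M; lia.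
pose kap : C := (Q ^_ (N' - b) * b`!)%:R / (N'`!)%:R.
rewrite (eq_bigr (fun i : 'I_K.+1 => kap * ((-1) ^+ i * 'C(K, i)%:R * 'C(M + i, b)%:R))).
  by rewrite -mulr_sumr fd // mulr0.
move=> i _.
have hi : (i <= N')%N by have := ltn_ord i; rewrite /N'; lia.
rewrite hi muln1 /lam0 falling_nat // (_ : r1%:R - s%:R = M%:R :> C); last by rewrite natrB.
rewrite rising_nat.
have H : ('C(Q, N' - i) * (M + i) ^_ i * N'`! = Q ^_ (N' - b) * b`! * 'C(M + i, b) * N' ^_ i)%N.
  rewrite -(ffact_fact hi).
  transitivity ('C(Q, N' - i) * (N' - i)`! * (M + i) ^_ i * N' ^_ i)%N; first by ring.
  rewrite bin_ffact (@ffact_swap Q N' M b i) //; last by lia.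
    by rewrite -(bin_ffact (M + i) b) [('C(M + i, b) * _)%N]mulnC !mulnA.
have hD : ((N' ^_ i)%:R : C) != 0 by rewrite pnatr_eq0 -lt0n ffact_gt0.
have hF : ((N'`!)%:R : C) != 0 by rewrite pnatr_eq0 -lt0n fact_gt0.
rewrite /kap.
have -> : ('C(K, i) * 'C(Q, N' - i))%:R * ((-1) ^+ i * ((M + i) ^_ i)%:R / (N' ^_ i)%:R) =
   ((-1) ^+ i * 'C(K, i)%:R * ('C(Q, N' - i) * (M + i) ^_ i)%:R) / (N' ^_ i)%:R :> C.
  by rewrite !natrM; field.
have -> : (Q ^_ (N' - b) * b`!)%:R / (N'`!)%:R * ((-1) ^+ i * 'C(K, i)%:R * 'C(M + i, b)%:R) =
   ((-1) ^+ i * 'C(K, i)%:R * (Q ^_ (N' - b) * b`! * 'C(M + i, b))%:R) / (N'`!)%:R :> C.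
  by rewrite !natrM; field.
apply/eqP; rewrite eqr_div //; apply/eqP.
rewrite -!mulrA -!natrM H !natrM; ring.
Qed.

Lemma lam_row_orth (C : numClosedFieldType) n r1 s (y B : {set 'I_n}) :
  (s <= r1)%N -> (s <= n - r1)%N -> #|y| = s -> (#|B| < s)%N ->
  \sum_(x1 : {set 'I_n} | #|x1| == r1) lam0 C n r1 s #|y :\: x1| * (B \subset x1)%:R = 0.
Proof.
move=> hs1 hs2 hy hB.
rewrite (eq_bigr (fun x1 : {set 'I_n} => if B \subset x1 then lam0 C n r1 s #|y :\: x1| else 0)); last first.
  by move=> x1 _; case: (B \subset x1); rewrite ?mulr1 ?mulr0.
rewrite -big_mkcondr /=.
rewrite (reindex_inj (@setC_inj _)) /=.
rewrite (eq_bigl (fun z : {set 'I_n} => (z \subset ~: B) && (#|z| == n - r1)%N)); last first.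
  move=> z; rewrite [B \subset ~: z]subsetC [#|~: z|]cardsCs card_ord andbC.
  case: (z \subset ~: B) => //=.
  have : (#|z| <= n)%N by have := max_card (mem z); rewrite card_ord.
  by rewrite setCK => hz; apply/eqP/eqP => h; lia.
set A := y :\: B.
rewrite (eq_bigr (fun z : {set 'I_n} => lam0 C n r1 s #|z :&: A|)); last first.
  move=> z /andP[hz _]; have -> : y :\: ~: z = z :&: A; last by [].
  apply/setP=> u; rewrite !inE.
  case hu: (u \in z); rewrite ?andbT ?andbF //=.
  by have := subsetP hz u hu; rewrite inE => /negbTE ->.
rewrite sum_by_inter; last by apply/subsetP=> u; rewrite !inE => /andP[].
have cA : (#|A| + #|y :&: B| = s)%N by rewrite -hy -(cardsID B y) addnC.
have cB := cardsID y B.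
have cQ : #|~: B :\: A| = (n - #|B :|: y|)%N.
  have -> : ~: B :\: A = ~: (B :|: y).
    by apply/setP=> u; rewrite !inE; case: (u \in B); case: (u \in y).
  by rewrite cardsCs card_ord setCK.
have cU := cardsU B y.
have cBy : (#|B :|: y| <= n)%N by have := max_card (mem (B :|: y)); rewrite card_ord.
have cI : #|B :&: y| = #|y :&: B| by rewrite setIC.
apply: (@lam_ident C n r1 s #|A| #|~: B :\: A| #|B :\: y|) => //; lia.
Qed.

Definition fallP (C : numClosedFieldType) (q : {poly C}) (j : nat) : {poly C} :=
  \prod_(i < j) (q - (i%:R)%:P).
Definition cbP (C : numClosedFieldType) (q : {poly C}) (j : nat) : {poly C} :=
  fallP q j * (((j`!)%:R)^-1)%:P.
Definition Pp (C : numClosedFieldType) (n r1 r2 s : nat) : {poly C} :=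
  ((('C(r2, s))%:R)^-1)%:P *
  \sum_(j < s.+1) cbP 'X j * cbP ((r2%:R)%:P - 'X) (s - j) * (lam0 C n r1 s j)%:P.

Lemma Pp_eval (C : numClosedFieldType) n r1 r2 s (t : C) :
  (Pp C n r1 r2 s).[t] = ('C(r2, s))%:R^-1 *
     \sum_(j < s.+1) cbinom t j * cbinom (r2%:R - t) (s - j) * lam0 C n r1 s j.
Proof.
rewrite /Pp hornerM hornerC horner_sum; congr (_ * _); apply: eq_bigr => j _.
rewrite /cbP /fallP /cbinom /falling !hornerE !horner_prod.
rewrite (eq_bigr (fun i : 'I_j => t - i%:R)); last by move=> i _; rewrite !hornerE.
by rewrite (eq_bigr (fun i : 'I_(s - j) => r2%:R - t - i%:R)) // => i _; rewrite !hornerE.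
Qed.

Lemma size_fallP (C : numClosedFieldType) (q : {poly C}) j :
  (size q <= 2)%N -> (size (fallP q j) <= j.+1)%N.
Proof.
move=> hq; elim: j => [|j IH]; first by rewrite /fallP big_ord0 size_poly1.
rewrite /fallP big_ord_recr /= -/(@fallP C q j).
apply: leq_trans (size_mul_leq _ _) _.
have h2 : (size (q - (j%:R)%:P)%R <= 2)%N.
  apply: leq_trans (size_polyD _ _) _; rewrite geq_max hq size_polyN.
  by apply: leq_trans (size_polyC_leq1 _) _.
have := leq_add IH h2 => h; lia.
Qed.

Lemma size_mulC (C : numClosedFieldType) (q : {poly C}) (c : C) : (size (q * c%:P)%R <= size q)%N.
Proof.
apply: leq_trans (size_mul_leq _ _) _.
have := size_polyC_leq1 c; case: (size q) => [|m] //= h; lia.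
Qed.

Lemma size_Pp (C : numClosedFieldType) n r1 r2 s : (size (Pp C n r1 r2 s) <= s.+1)%N.
Proof.
rewrite /Pp mulrC; apply: leq_trans (size_mulC _ _) _.
apply: (big_ind (fun q : {poly C} => (size q <= s.+1)%N)).
- by rewrite size_poly0.
- by move=> q1 q2 h1 h2; apply: leq_trans (size_polyD _ _) _; rewrite geq_max h1 h2.
move=> j _; apply: leq_trans (size_mulC _ _) _.
apply: leq_trans (size_mul_leq _ _) _.
have h1 : (size (@cbP C 'X j) <= j.+1)%N.
  rewrite /cbP; apply: leq_trans (size_mulC _ _) _; apply: size_fallP; by rewrite size_polyX.
have h2 : (size (@cbP C ((r2%:R)%:P - 'X)%R (s - j)) <= (s - j).+1)%N.
  rewrite /cbP; apply: leq_trans (size_mulC _ _) _; apply: size_fallP.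
  apply: leq_trans (size_polyD _ _) _; rewrite geq_max size_polyN size_polyX andbT.
  by apply: leq_trans (size_polyC_leq1 _) _.
have hj : (j <= s)%N by rewrite -ltnS.
have := leq_add h1 h2; lia.
Qed.

Lemma falling_nat_all (C : numClosedFieldType) (N j : nat) :
  falling (N%:R : C) j = (N ^_ j)%:R.
Proof.
elim: j => [|j IH]; first by rewrite /falling big_ord0 ffactn0.
rewrite /falling big_ord_recr /= -/(falling _ _) IH ffactnSr natrM.
case: (leqP j N) => h; first by rewrite natrB.
by rewrite ffact_small // !mul0r.
Qed.

Lemma cbinom_nat (C : numClosedFieldType) (t j : nat) : cbinom (t%:R : C) j = ('C(t, j))%:R.
Proof.
rewrite /cbinom falling_nat_all -bin_ffact natrM mulfK //.
by rewrite pnatr_eq0 -lt0n fact_gt0.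
Qed.

Lemma lam0_0 (C : numClosedFieldType) n r1 s : lam0 C n r1 s 0 = 1.
Proof. by rewrite /lam0 /rising /falling !big_ord0 expr0 divr1 mulr1. Qed.

Lemma Pp_0 (C : numClosedFieldType) n r1 r2 s : (s <= r2)%N -> (Pp C n r1 r2 s).[0] = 1.
Proof.
move=> hs; rewrite Pp_eval big_ord_recl /= big1 ?addr0.
  rewrite -(mulr0n 1 : 0%:R = 0 :> C) subr0 !cbinom_nat bin0 subn0 lam0_0 mul1r mulr1 mulVf //.
  by rewrite pnatr_eq0 -lt0n bin_gt0.
move=> j _; rewrite -(mulr0n 1 : 0%:R = 0 :> C) cbinom_nat bin0n /= mul0r; by rewrite !mul0r.
Qed.

Lemma sum_widen0 (C : numClosedFieldType) (a b : nat) (F : nat -> C) :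
  (a <= b)%N -> (forall i, (a <= i)%N -> F i = 0) ->
  \sum_(i < a) F i = \sum_(i < b) F i.
Proof.
move=> hab hF; rewrite (big_ord_widen b F hab) big_mkcond; apply: eq_bigr => i _.
by case: ifP => // /negbT; rewrite -leqNgt => /hF ->.
Qed.

Lemma Pp_row (C : numClosedFieldType) n r1 r2 s (x2 x1 : {set 'I_n}) :
  #|x2| = r2 -> (Pp C n r1 r2 s).[tt C x2 x1] =
  ('C(r2, s))%:R^-1 * \sum_(y : {set 'I_n} | (y \subset x2) && (#|y| == s)) lam0 C n r1 s #|y :\: x1|.
Proof.
move=> hx2; rewrite Pp_eval /tt; congr (_ * _).
set t := #|x2 :\: x1|.
have ht : (t <= r2)%N by rewrite -hx2 subset_leq_card // subsetDl.
rewrite (eq_bigr (fun y : {set 'I_n} => lam0 C n r1 s #|y :&: (x2 :\: x1)|)); last first.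
  move=> y /andP[hy _]; have -> // : y :&: (x2 :\: x1) = y :\: x1.
  apply/setP=> u; rewrite !inE; case hu: (u \in y); rewrite ?andbF //=.
  by rewrite (subsetP hy u hu) andbT.
rewrite sum_by_inter ?subsetDl //.
have -> : #|x2 :\: (x2 :\: x1)| = (r2 - t)%N.
  have -> : x2 :\: (x2 :\: x1) = x2 :&: x1.
    by apply/setP=> u; rewrite !inE; case: (u \in x2); case: (u \in x1).
  by have := cardsID x1 x2; rewrite hx2 /t; lia.
rewrite -natrB //.
under eq_bigr => j _ do rewrite !cbinom_nat.
rewrite -/t.
pose F := fun i : nat => ('C(t, i) * 'C(r2 - t, s - i) * (i <= s))%N%:R * lam0 C n r1 s i.
transitivity (\sum_(i < s + t + 1) F i).
  rewrite -(@sum_widen0 C s.+1 (s + t + 1) F); first 1 last.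
  - by rewrite addn1 ltnS leq_addr.
  - by move=> i hi; rewrite /F (leqNgt i s) hi muln0 mul0r.
  by apply: eq_bigr => i _; rewrite /F -ltnS ltn_ord muln1 !natrM.
symmetry; apply: sum_widen0.
  by rewrite addn1 ltnS leq_addl.
by move=> i hi; rewrite /F bin_small // mul0n mul0n mul0r.
Qed.

Lemma rowP (C : numClosedFieldType) n r1 r2 s (x2 : {set 'I_n}) :
  (s <= r1)%N -> (s <= n - r1)%N -> (s <= r2)%N -> (0 < s)%N -> #|x2| = r2 ->
  forall g : {poly C}, (size g <= s)%N ->
  \sum_(x1 : {set 'I_n} | #|x1| == r1) (Pp C n r1 r2 s).[tt C x2 x1] * g.[tt C x2 x1] = 0.
Proof.
move=> hs1 hs2 hs3 s0 hx2 g hg.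
under eq_bigr => x1 _ do rewrite Pp_row // -mulrA mulr_suml.
rewrite -mulr_sumr exchange_big /= big1 ?mulr0 // => y /andP[_ /eqP hy].
have hG : spanB s.-1 (fun x => g.[tt C x2 x]).
  by apply: spanB_poly; [exact: tt_span | rewrite prednK].
have hw : forall B : {set 'I_n}, (#|B| <= s.-1)%N ->
    \sum_(x : {set 'I_n}) (if #|x| == r1 then lam0 C n r1 s #|y :\: x| else 0) * (B \subset x)%:R = 0.
  move=> B hB.
  have hB' : (#|B| < s)%N by rewrite (leq_ltn_trans hB) // prednK.
  rewrite -[RHS](@lam_row_orth C n r1 s y B) // [RHS]big_mkcond /=.
  by apply: eq_bigr => x _; case: ifP => _; rewrite ?mul0r.
have := orth_span hw hG => /= h; rewrite -[RHS]h big_mkcond; apply: eq_bigr => x _.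
by case: ifP => _; rewrite ?mul0r.
Qed.

Lemma card_int n a b : (a <= b)%N -> (b <= n)%N ->
  #|[set i : 'I_n | (a <= i)%N && (i < b)%N]| = (b - a)%N.
Proof.
elim: b => [|b IH] hab hbn.
  rewrite (_ : [set i : 'I_n | _] = set0) ?cards0 //.
  by apply/setP=> i; rewrite !inE ltn0 andbF.
case: (leqP a b) => hab'.
  have hb : (b < n)%N by [].
  rewrite (_ : [set i : 'I_n | _] = Ordinal hb |: [set i : 'I_n | (a <= i)%N && (i < b)%N]).
    rewrite cardsU1 IH ?(ltnW hbn) // inE /= ltnn andbF /=; lia.
  apply/setP=> i; rewrite !inE -val_eqE /=.
  case: (i =P b :> nat) => [->|/eqP hib] /=; first by rewrite hab' leqnn.
  apply/idP/idP => /andP[h1 h2]; apply/andP; split => //; lia.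
have -> : a = b.+1 by apply/eqP; rewrite eqn_leq hab.
rewrite subnn (_ : [set i : 'I_n | _] = set0) ?cards0 //.
by apply/setP=> i; rewrite !inE; apply/negbTE; apply/negP=> /andP[h1 h2]; lia.
Qed.

Definition X2 n r2 : {set 'I_n} := [set i : 'I_n | (i < r2)%N].

Lemma uniq0 (C : numClosedFieldType) n r1 r2 s (h : {poly C}) :
  (r1 <= n)%N -> (r2 <= n)%N -> (s <= r1)%N -> (s <= n - r1)%N -> (s <= r2)%N -> (s <= n - r2)%N ->
  (size h <= s)%N ->
  (forall g : {poly C}, (size g <= s)%N ->
     \sum_(x1 : {set 'I_n} | #|x1| == r1) h.[tt C (X2 n r2) x1] * g.[tt C (X2 n r2) x1] = 0) ->
  h = 0.
Proof.
move=> hr1 hr2 hs1 hs2 hs3 hs4 hh H.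
have := H (map_poly Num.conj h); rewrite size_map_poly => /(_ hh) H0.
have Hz : forall x1 : {set 'I_n}, #|x1| == r1 -> h.[tt C (X2 n r2) x1] = 0.
  move=> x1 hx1.
  have hpos : forall x : {set 'I_n}, #|x| == r1 -> 0 <= `|h.[tt C (X2 n r2) x]| ^+ 2.
    by move=> x _; rewrite exprn_ge0.
  have hsum : \sum_(x : {set 'I_n} | #|x| == r1) `|h.[tt C (X2 n r2) x]| ^+ 2 = 0.
    rewrite -[RHS]H0; apply: eq_bigr => x _.
    by rewrite normCK /tt -conj_horner_nat.
  have := @psumr_eq0P C _ (fun x : {set 'I_n} => #|x| == r1)
     (fun x => `|h.[tt C (X2 n r2) x]| ^+ 2) hpos hsum x1 hx1.
  by move/eqP; rewrite expf_eq0 /= normr_eq0 => /eqP.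
set lo := (r2 - r1)%N.
have Hroot : forall k, (k <= s)%N -> root h (lo + k)%:R.
  move=> k hk; apply/eqP.
  pose x1 := [set i : 'I_n | (lo + k <= i)%N && (i < lo + k + r1)%N].
  have -> : ((lo + k)%:R : C) = tt C (X2 n r2) x1.
    rewrite /tt.
    have -> : X2 n r2 :\: x1 = [set i : 'I_n | (0 <= i)%N && (i < lo + k)%N].
      apply/setP=> i; rewrite !inE /lo.
      apply/idP/idP.
        by move=> /andP[/negP h1 h2]; apply/andP; split => //; apply/negP => h3; apply: h1; apply/andP; split; lia.
      by move=> /andP[_ h1]; apply/andP; split; [apply/negP => /andP[h2 h3]; lia | lia].
    by rewrite card_int ?subn0 //; rewrite /lo; lia.
  apply: Hz; rewrite card_int; last by rewrite /lo; lia.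
  - by apply/eqP; lia.
  - by lia.
apply/eqP; apply: contraT => hn0.
pose rs := [seq ((lo + k)%:R : C) | k <- iota 0 s.+1].
have := max_poly_roots hn0 (rs := rs).
rewrite size_map size_iota => H1.
have : (s.+1 < size h)%N.
  apply: H1.
    apply/allP=> z /mapP[k]; rewrite mem_iota add0n => /andP[_ hk] ->.
    by apply: Hroot; rewrite -ltnS.
  rewrite map_inj_uniq ?iota_uniq // => k1 k2 /eqP; rewrite eqr_nat eqn_add2l => /eqP.
  by [].
by rewrite ltnNge (leq_trans hh) // leqnSn.
Qed.

Lemma card_X2 n r2 : (r2 <= n)%N -> #|X2 n r2| = r2.
Proof.
move=> h; have -> : X2 n r2 = [set i : 'I_n | (0 <= i)%N && (i < r2)%N].
  by apply/setP=> i; rewrite !inE.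
by rewrite card_int // subn0.
Qed.

Lemma const_poly_eq (C : numClosedFieldType) (p q : {poly C}) :
  (size p <= 1)%N -> (size q <= 1)%N -> p.[0] = q.[0] -> p = q.
Proof.
move=> hp hq h0; rewrite (size1_polyC hp) (size1_polyC hq) -!horner_coef0 h0 //.
Qed.

Lemma partB (C : numClosedFieldType) n r1 r2 s (p : {poly C}) :
  (1 <= n)%N -> (r1 <= n)%N -> (r2 <= n)%N -> (s <= Nmin n r1 r2)%N ->
  IsLambda n r1 r2 s p -> p = Pp C n r1 r2 s.
Proof.
move=> hn hr1 hr2 hN hL.
have hs1 : (s <= r1)%N by move: hN; rewrite /Nmin; lia.
have hs2 : (s <= n - r1)%N by move: hN; rewrite /Nmin; lia.
have hs3 : (s <= r2)%N by move: hN; rewrite /Nmin; lia.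
have hs4 : (s <= n - r2)%N by move: hN; rewrite /Nmin; lia.
have hL' := hL.
case: hL' => [W1 [W2 [L [_ [_ [_ [_ [_ [_ [hsz hp0]]]]]]]]]].
have hP0 := @Pp_0 C n r1 r2 s hs3.
case: (posnP s) => [s0|s0].
  apply: const_poly_eq; first by rewrite hsz s0.
    by have := size_Pp C n r1 r2 s; rewrite s0.
  by rewrite hp0 hP0.
have hss : (s + s <= n)%N by lia.
set P := Pp C n r1 r2 s.
have hx2 := card_X2 hr2.
have Hp := rowp hss s0 hL hx2.
have HP := @rowP C n r1 r2 s (X2 n r2) hs1 hs2 hs3 s0 hx2.
have hps : p`_s != 0.
  have : lead_coef p != 0 by rewrite lead_coef_eq0 -size_poly_gt0 hsz.
  by rewrite lead_coefE hsz.
pose c := P`_s / p`_s.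
pose h := P - c *: p.
have hh : (size h <= s)%N.
  apply/leq_sizeP => j hj; rewrite /h coefB coefZ.
  case: (ltngtP j s) => hjs.
  - by exfalso; move: hj; rewrite leqNgt hjs.
  - have hP := size_Pp C n r1 r2 s.
    rewrite nth_default; last by apply: leq_trans hP _.
    by rewrite nth_default ?hsz // mulr0 subrr.
  - by rewrite hjs /c mulfVK // subrr.
have H0 : h = 0.
  apply: (@uniq0 C n r1 r2 s h) => // g hg.
  under eq_bigr => x1 _ do rewrite /h hornerD hornerN hornerZ mulrDl mulNr -mulrA.
  by rewrite big_split /= sumrN -mulr_sumr HP // Hp // mulr0 subr0.
have hc : c = 1.
  have : P.[0] = (c *: p).[0] by move/eqP: H0; rewrite subr_eq0 => /eqP ->.
  by rewrite hornerZ hp0 mulr1 hP0.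
by move/eqP: H0; rewrite /h hc scale1r subr_eq0 => /eqP ->.
Qed.

Theorem lemma1 (C : numClosedFieldType) (n r1 r2 s : nat) :
  (1 <= n)%N -> (r1 <= n)%N -> (r2 <= n)%N -> (s <= Nmin n r1 r2)%N ->
  (forall q : {poly C}, IsLambda n r1 s s q ->
     forall j : nat, (j <= s)%N -> q.[j%:R] = lam0 C n r1 s j) /\
  (forall p : {poly C}, IsLambda n r1 r2 s p ->
     forall t : C,
       p.[t] = ('C(r2, s))%:R^-1 *
               \sum_(j < s.+1) cbinom t j * cbinom (r2%:R - t) (s - j)
                                * lam0 C n r1 s j).
Proof.
move=> hn hr1 hr2 hN; split.
  move=> q hq j hj.
  have hs1 : (s <= r1)%N by move: hN; rewrite /Nmin; lia.
  have hs2 : (s <= n - r1)%N by move: hN; rewrite /Nmin; lia.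
  have hN' : (s <= Nmin n r1 s)%N by rewrite /Nmin; lia.
  have hsn : (s <= n)%N by lia.
  rewrite (partB hn hr1 hsn hN' hq) Pp_eval binn invr1 mul1r -natrB //.
  rewrite (bigD1 (Ordinal (hj : (j < s.+1)%N))) //= big1 ?addr0.
    by rewrite !cbinom_nat !binn !mul1r.
  move=> i /eqP hij; rewrite !cbinom_nat.
  case: (ltngtP i j) => h.
  - rewrite (@bin_small (s - j) (s - i)) ?mulr0 ?mul0r //; lia.
  - by rewrite bin_small // mul0r mul0r.
  - by exfalso; apply: hij; apply: val_inj.
move=> p hp t; by rewrite (partB hn hr1 hr2 hN hp) Pp_eval.
Qed.
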